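(* Let $(\mathbf c,\mathbf g)\in\mathbf C^5_{\rm aut}$ with $\operatorname{Hom}(N_{\mathbf c},\mathbb G_{\mathbf g})=0$, and let $\mathbf m\in\mathbf M_{\mathbf c}$ be $|N_{\mathbf c}|^+$-free over $(\mathbf c,\mathbf g)$. Then $\operatorname{Hom}(N_{\mathbf c},\mathcal Z(H_{\mathbf m}))\subseteq\operatorname{Hom}(N_{\mathbf c},H_{\mathbf c})$, i.e. every homomorphism $N_{\mathbf c}\to\mathcal Z(H_{\mathbf m})$ has image contained in $H_{\mathbf c}$.
   Context: Groups are not assumed abelian; $\mathcal Z(H)$ is the center of $H$; $J_p$ is the additive group of $p$-adic integers. $\mathbf C^4_{\rm aut}$: tuples $\mathbf c=(L_{\mathbf c},N_{\mathbf c},H_{\mathbf c},h_{\mathbf c},h^*_{\mathbf c},F_{\mathbf c},(Q^{\bar s}_{\mathbf c}),H^*_{\mathbf c},\mathbb P_{\mathbf c})$: $L_{\mathbf c},H_{\mathbf c}$ groups; $F_{\mathbf c}:L_{\mathbf c}\to\operatorname{Aut}(H_{\mathbf c})$ injective homomorphism, $F^\ell_{\mathbf c}:=F_{\mathbf c}(\ell)$; $N_{\mathbf c}\trianglelefteq L_{\mathbf c}$; $h_{\mathbf c}:H_{\mathbf c}\to N_{\mathbf c}$ epimorphism with kernel $\mathcal Z(H_{\mathbf c})$ and $F_{\mathbf c}(h_{\mathbf c}(a))=(x\mapsto axa^{-1})$; $h^*_{\mathbf c}:N_{\mathbf c}\to H_{\mathbf c}$ a map with $h_{\mathbf c}\circ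 h^*_{\mathbf c}=\mathrm{id}$; $(b_1,\dots,b_n)\in Q^{\bar s}_{\mathbf c}$ iff $\sum_is_iF^{b_i}_{\mathbf c}\restriction\mathcal Z(H_{\mathbf c})=0$ ($\bar s\in\mathbb Z^n$); $\mathcal Z(H_{\mathbf c})$ reduced; $H^*_{\mathbf c}\le H_{\mathbf c}$, $H_{\mathbf c}=\bigcup_{x\in\mathcal Z(H_{\mathbf c})}H^*_{\mathbf c}x$, $\mathcal Z(H^*_{\mathbf c})=\mathcal Z(H_{\mathbf c})\cap H^*_{\mathbf c}$; $\mathbb P_{\mathbf c}$ = primes $p$ such that $\mathcal Z(H_{\mathbf c})$ has a nonzero element of $p$-power order (then so does $\mathcal Z(H^*_{\mathbf c})$) or $J_p$ embeds in $\mathcal Z(H_{\mathbf c})$ (then $J_p$ embeds in $\mathcal Z(H^*_{\mathbf c})$); $\mathcal Z(H_{\mathbf c})/\mathcal Z(H^*_{\mathbf c})$ torsion-free and $p$-divisible for all $p\notin\mathbb P_{\mathbf c}$. $\mathbf C^5_{\rm aut}$: pairs $(\mathbf c,\mathbf g)$, $\mathbf c\in\mathbf C^4_{\rm aut}$, $\mathbf g=(\mathbb G_{\mathbf g},(F^\ell_{\mathbf g})_{\ell\in L_{\mathbf c}})$ with $\mathbb G_{\mathbf g}$ reduced torsion-free abelian, no $J_p$ embeddable, $F^\ell_{\mathbf g}\in\operatorname{Aut}(\mathbb G_{\mathbf g})$, and $(b_i)\in Q^{\bar s}_{\mathbf c}\Rightarrow\sum_is_iF^{b_i}_{\mathbf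 g}=0$. $\mathbf M_{\mathbf c}$ (for $(\mathbf c,\mathbf g)\in\mathbf C^5_{\rm aut}$): pairs $(\mathbf m,\mathbf g)\in\mathbf C^5_{\rm aut}$ (same $\mathbf g$) with $L_{\mathbf m}=L_{\mathbf c}$, $N_{\mathbf m}=N_{\mathbf c}$, $H_{\mathbf c}\subseteq H_{\mathbf m}$, $h_{\mathbf c}\subseteq h_{\mathbf m}$, $h^*_{\mathbf m}=h^*_{\mathbf c}$, $F^\ell_{\mathbf c}\subseteq F^\ell_{\mathbf m}$, $Q^{\bar s}_{\mathbf m}=Q^{\bar s}_{\mathbf c}$, $H_{\mathbf m}$ generated by $\mathcal Z(H_{\mathbf m})\cup H_{\mathbf c}$, $\mathcal Z(H_{\mathbf c})=\mathcal Z(H_{\mathbf m})\cap H_{\mathbf c}$, $\mathbb P_{\mathbf m}=\mathbb P_{\mathbf c}$, $H^*_{\mathbf m}=H^*_{\mathbf c}$. $\mathbf m_1\le_{\mathbf c}\mathbf m_2$ means $H_{\mathbf m_1}\subseteq H_{\mathbf m_2}$, $h_{\mathbf m_1}\subseteq h_{\mathbf m_2}$, $F^\ell_{\mathbf m_1}\subseteq F^\ell_{\mathbf m_2}$ for all $\ell$. $\mathbf m'\in\mathbf M_{\mathbf c}$ is free over $(\mathbf c,\mathbf g)$ if there are injective homomorphisms $f_\xi:\mathbb G_{\mathbf g}\to\mathcal Z(H_{\mathbf m'})$ ($\xi<\zeta$) with $f_\xi\circ F^\ell_{\mathbf g}=F^\ell_{\mathbf m'}\circ f_\xi$ for all $\ell$,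 such that $\mathcal Z(H_{\mathbf m'})=\bigoplus_{\xi<\zeta}f_\xi(\mathbb G_{\mathbf g})\oplus\mathcal Z(H_{\mathbf c})$. $\mathbf m$ is $\mu$-free over $(\mathbf c,\mathbf g)$ if for every subgroup $G'$ of $\mathcal Z(H_{\mathbf m})/\mathcal Z(H_{\mathbf c})$ of cardinality $<\mu$ there is $\mathbf m'\in\mathbf M_{\mathbf c}$ with $\mathbf m'\le_{\mathbf c}\mathbf m$, free over $(\mathbf c,\mathbf g)$, and $G'\subseteq\mathcal Z(H_{\mathbf m'})/\mathcal Z(H_{\mathbf c})$. *)

(* Defs.v *)
From mathcomp Require Import all_boot all_algebra.
From Stdlib Require List.

Set Implicit Arguments.
Unset Strict Implicit.
Unset Printing Implicit Defensive.

Import GRing.Theory.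
Local Open Scope ring_scope.

Record grp := Grp {
  gcar :> Type;
  gmul : gcar -> gcar -> gcar;
  ginv : gcar -> gcar;
  gone : gcar;
  gmulA : forall x y z, gmul x (gmul y z) = gmul (gmul x y) z;
  gmul1 : forall x, gmul gone x = x;
  gmulV : forall x, gmul (ginv x) x = gone }.

Arguments gmul {g}.
Arguments ginv {g}.
Arguments gone {g}.

Definition grp_of_zmod (G : zmodType) : grp :=
  @Grp G +%R -%R 0 (@addrA G) (@add0r G) (@addNr G).

Section Grp.
Variable T : grp.

Fixpoint gpow (x : T) (n : nat) : T :=
  match n with 0%N => gone | n'.+1 => gmul x (gpow x n') end.

Definition zpow (x : T) (z : int) : T :=
  match z with Posz n => gpow x n | Negz n => ginv (gpow x n.+1) end.

Definition gprod (s : seq T) : T := foldr gmul gone s.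

Definition subgroup (S : T -> Prop) : Prop :=
  [/\ S gone, (forall x y, S x -> S y -> S (gmul x y))
    & (forall x, S x -> S (ginv x))].

Definition normal_sub (S : T -> Prop) : Prop :=
  subgroup S /\ forall n l, S n -> S (gmul (gmul l n) (ginv l)).

Definition center (S : T -> Prop) (x : T) : Prop :=
  S x /\ forall y, S y -> gmul x y = gmul y x.

Definition generated (A : T -> Prop) (x : T) : Prop :=
  forall S, subgroup S -> (forall y, A y -> S y) -> S x.

Definition reduced (A : T -> Prop) : Prop :=
  forall D : T -> Prop, subgroup D -> (forall x, D x -> A x) ->
    (forall x n, D x -> (0 < n)%N -> exists2 y, D y & gpow y n = x) ->
    forall x, D x -> x = gone.

Definition quot_torsion_free (A B : T -> Prop) : Prop :=
  forall x n, A x -> (0 < n)%N -> B (gpow x n) -> B x.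

Definition quot_p_divisible (A B : T -> Prop) (p : nat) : Prop :=
  forall x, A x -> exists2 y, A y & B (gmul x (ginv (gpow y p))).

Definition has_p_torsion (A : T -> Prop) (p : nat) : Prop :=
  exists x, [/\ A x, x <> gone & exists k, gpow x (p ^ k) = gone].

End Grp.

Arguments gpow {T}.
Arguments zpow {T}.
Arguments gprod {T}.

(* The p-adic integers J_p, as compatible sequences of residues:
   a : nat -> int with 0 <= a n < p^n and a (n+1) = a n mod p^n.          *)

Definition padic (p : nat) (a : nat -> int) : Prop :=
  forall n, (0 <= a n)%R /\ (a n < (p ^ n)%N%:Z)%R /\
            ((a n.+1) %% (p ^ n)%N%:Z)%Z = a n.

Definition padic_add (p : nat) (a b : nat -> int) : nat -> int :=
  fun n => ((a n + b n) %% (p ^ n)%N%:Z)%Z.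

Definition Jp_embeds (T : grp) (p : nat) (A : T -> Prop) : Prop :=
  exists phi : (nat -> int) -> T,
    [/\ (forall a, padic p a -> A (phi a)),
        (forall a b, padic p a -> padic p b ->
           phi (padic_add p a b) = gmul (phi a) (phi b))
      & (forall a b, padic p a -> padic p b -> phi a = phi b ->
           forall n, a n = b n)].

Definition aut_on (T : grp) (H : T -> Prop) (f : T -> T) : Prop :=
  [/\ (forall x, H x -> H (f x)),
      (forall x y, H x -> H y -> f (gmul x y) = gmul (f x) (f y)),
      (forall y, H y -> exists2 x, H x & f x = y)
    & (forall x y, H x -> H y -> f x = f y -> x = y)].

Definition hom_on (T1 T2 : grp) (A : T1 -> Prop) (B : T2 -> Prop)
    (f : T1 -> T2) : Prop :=
  (forall x, A x -> B (f x)) /\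
  (forall x y, A x -> A y -> f (gmul x y) = gmul (f x) (f y)).

(* All the objects are placed inside fixed ambient groups:
   L = L_c (= L_m), N = N_c (= N_m) a predicate on L, T an ambient group in
   which the H's live as subgroups (H_c ⊆ H_m' ⊆ H_m), one function
   h : T -> L whose restrictions are h_c, h_m', h_m, one family
   F : L -> T -> T whose restrictions to H_c, H_m', H_m are F_c, F_m', F_m,
   one section hs = h^*_c = h^*_m and one predicate Hs = H^*_c = H^*_m.
   This encodes precisely the conditions H_c ⊆ H_m, h_c ⊆ h_m,
   F^l_c ⊆ F^l_m, h^*_m = h^*_c, H^*_m = H^*_c, L_m = L_c, N_m = N_c. *)

Section Objects.
Variables (L T : grp) (N : L -> Prop) (h : T -> L) (hs : L -> T)
          (F : L -> T -> T) (Hs : T -> Prop).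

(* (b_1..b_n) ∈ Q^{s}: sum_i s_i F^{b_i} restricted to Z(H) is 0;
   the pair (s, b) is encoded as the list of pairs (s_i, b_i). *)
Definition Qrel (H : T -> Prop) (sb : seq (int * L)) : Prop :=
  forall x, center H x ->
    gprod (map (fun p => zpow (F p.2 x) p.1) sb) = gone.

Definition Pset (H : T -> Prop) (p : nat) : Prop :=
  prime p /\ (has_p_torsion (center H) p \/ Jp_embeds p (center H)).

Definition isC4 (H : T -> Prop) : Prop :=
  [/\ normal_sub N /\ subgroup H,
      [/\ (forall l, aut_on H (F l)),
          (forall l1 l2 x, H x -> F (gmul l1 l2) x = F l1 (F l2 x))
        & (forall l1 l2, (forall x, H x -> F l1 x = F l2 x) -> l1 = l2)],
      [/\ hom_on H N h,
          (forall n, N n -> exists2 a, H a & h a = n),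
          (forall a, H a -> (h a = gone <-> center H a))
        & (forall a x, H a -> H x ->
             F (h a) x = gmul (gmul a x) (ginv a))],
      (forall n, N n -> H (hs n) /\ h (hs n) = n) /\
      reduced (center H) &
      [/\ subgroup Hs /\ (forall x, Hs x -> H x),
          (forall x, H x -> exists y z, [/\ Hs y, center H z & x = gmul y z]),
          (forall x, center Hs x <-> center H x /\ Hs x) /\
          (forall p, Pset H p ->
             (has_p_torsion (center H) p -> has_p_torsion (center Hs) p) /\
             (Jp_embeds p (center H) -> Jp_embeds p (center Hs))),
          quot_torsion_free (center H) (center Hs)
        & (forall p, prime p -> ~ Pset H p ->
             quot_p_divisible (center H) (center Hs) p)]].

Definition isC5 (H : T -> Prop) (G : zmodType) (FG : L -> G -> G) : Prop :=
  [/\ isC4 H /\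
      reduced (T := grp_of_zmod G) (fun _ => True),
      quot_torsion_free (T := grp_of_zmod G) (fun _ => True) (fun x => x = 0),
      (forall p, prime p -> ~ Jp_embeds (T := grp_of_zmod G) p (fun _ => True)),
      (forall l, aut_on (T := grp_of_zmod G) (fun _ => True) (FG l))
    & (forall sb, Qrel H sb ->
         forall y : G, \sum_(p <- sb) (FG p.2 y) *~ p.1 = 0)].

Definition inM (Hc Hm : T -> Prop) (G : zmodType) (FG : L -> G -> G) : Prop :=
  [/\ isC5 Hm FG /\
      (forall x, Hc x -> Hm x),
      (forall sb, Qrel Hm sb <-> Qrel Hc sb),
      (forall x, Hm x <-> generated (fun y => center Hm y \/ Hc y) x),
      (forall x, center Hc x <-> center Hm x /\ Hc x)
    & (forall p, Pset Hm p <-> Pset Hc p)].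

Definition free_over (Hc Hm' : T -> Prop) (G : zmodType) (FG : L -> G -> G)
    : Prop :=
  exists (I : Type) (f : I -> G -> T),
    [/\ (forall i, hom_on (T1 := grp_of_zmod G) (fun _ => True) (center Hm')
                          (f i)),
        (forall i (x y : G), f i x = f i y -> x = y),
        (forall i l (x : G), f i (FG l x) = F l (f i x)),
        (* Z(H_m') = (+)_i f_i(G) (+) Z(H_c) *)
        (forall x, center Hm' x ->
           exists (s : seq (I * G)) (z : T),
             [/\ List.NoDup (map fst s), center Hc z &
                 x = gmul (gprod (map (fun q => f q.1 q.2) s)) z])
      & (forall (s : seq (I * G)) (z : T),
           List.NoDup (map fst s) -> center Hc z ->
           gmul (gprod (map (fun q => f q.1 q.2) s)) z = gone ->
           z = gone /\ forall q, List.In q s -> q.2 = 0)].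

(* m is |N|^+-free over (c, g): every subgroup G' of Z(H_m)/Z(H_c) of
   cardinality <= |N| (i.e. < |N|^+) is contained in Z(H_m')/Z(H_c) for some
   m' ∈ M_c, m' <=_c m, free over (c, g).  A subgroup of the quotient is
   given by its preimage G'' (Z(H_c) ⊆ G'' ⊆ Z(H_m)); its cardinality is
   <= |N| iff there is an injection of G''/Z(H_c) into N. *)
Definition mu_free_N (Hc Hm : T -> Prop) (G : zmodType) (FG : L -> G -> G)
    : Prop :=
  forall G'' : T -> Prop,
    subgroup G'' ->
    (forall x, center Hc x -> G'' x) ->
    (forall x, G'' x -> center Hm x) ->
    (exists phi : T -> L,
        (forall x, G'' x -> N (phi x)) /\
        (forall x y, G'' x -> G'' y -> phi x = phi y ->
           center Hc (gmul x (ginv y)))) ->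
    exists Hm' : T -> Prop,
      [/\ inM Hc Hm' FG, (forall x, Hm' x -> Hm x), free_over Hc Hm' FG
        & (forall x, G'' x -> center Hm' x)].

End Objects.

(* Main.v *)
Require Import Defs.
From mathcomp Require Import all_boot all_algebra.
From HB Require Import structures.
From mathcomp Require Import boolp.
From Stdlib Require Import ClassicalEpsilon.
Set Implicit Arguments.
Unset Strict Implicit.
Unset Printing Implicit Defensive.
Import GRing.Theory.
Section GL.
Variable T : grp.
Implicit Types x y z : T.
Lemma gmulVr x : gmul x (ginv x) = gone.
Proof.
rewrite -[gmul x (ginv x)]gmul1 -(gmulV (ginv x)) -gmulA (gmulA (ginv x)) gmulV gmul1.
by rewrite gmulV.
Qed.
Lemma gmulr1 x : gmul x gone = x.
Proof. by rewrite -(gmulV x) gmulA gmulVr gmul1. Qed.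
Lemma gcancl x y z : gmul x y = gmul x z -> y = z.
Proof. by move=> e; rewrite -(gmul1 y) -(gmulV x) -gmulA e gmulA gmulV gmul1. Qed.
Lemma gcancr x y z : gmul y x = gmul z x -> y = z.
Proof. by move=> e; rewrite -(gmulr1 y) -(gmulVr x) gmulA e -gmulA gmulVr gmulr1. Qed.
Lemma ginvE x y : gmul y x = gone -> y = ginv x.
Proof. by move=> e; apply: (@gcancr x); rewrite e gmulV. Qed.
Lemma ginvM x y : ginv (gmul x y) = gmul (ginv y) (ginv x).
Proof.
by apply/esym/ginvE; rewrite -gmulA (gmulA (ginv x)) gmulV gmul1 gmulV.
Qed.
End GL.
Section GL2.
Variable T : grp.
Lemma hom1 (T2 : grp) (A : T -> Prop) (B : T2 -> Prop) f :
  subgroup A -> hom_on A B f -> f gone = gone.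
Proof.
move=> [A1 _ _] [_ fM]; apply: (@gcancl T2 (f gone)).
by rewrite -fM // gmul1 gmulr1.
Qed.
Lemma homV (T2 : grp) (A : T -> Prop) (B : T2 -> Prop) f x :
  subgroup A -> hom_on A B f -> A x -> f (ginv x) = ginv (f x).
Proof.
move=> sA fh Ax; apply: ginvE; have [_ fM] := fh; case: (sA) => _ _ AV.
by rewrite -fM ?gmulV ?(hom1 sA fh) //; apply: AV.
Qed.
Lemma center_sub (H : T -> Prop) : subgroup H -> subgroup (center H).
Proof.
move=> [H1 HM HV]; split.
- by split => // y _; rewrite gmul1 gmulr1.
- move=> x y [Hx cx] [Hy cy]; split; first exact: HM.
  by move=> w Hw; rewrite -gmulA cy // gmulA cx // gmulA.
- move=> x [Hx cx]; split; first exact: HV.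
  move=> w Hw; apply: (@gcancl _ x); rewrite !gmulA gmulVr gmul1 cx //.
  by rewrite -gmulA gmulVr gmulr1.
Qed.
End GL2.

Record absub (T : grp) := AbSub {
  Zp : T -> Prop;
  Zp1 : Zp gone;
  ZpM : forall x y, Zp x -> Zp y -> Zp (gmul x y);
  ZpV : forall x, Zp x -> Zp (ginv x);
  ZpC : forall x y, Zp x -> Zp y -> gmul x y = gmul y x }.

Section ZS.
Variables (T : grp) (A : absub T).
Definition zs := {x : T | Zp A x}.
HB.instance Definition _ := gen_eqMixin zs.
HB.instance Definition _ := gen_choiceMixin zs.
Definition zs0 : zs := exist _ gone (Zp1 A).
Definition zsadd (a b : zs) : zs := exist _ (gmul (sval a) (sval b)) (ZpM (svalP a) (svalP b)).
Definition zsopp (a : zs) : zs := exist _ (ginv (sval a)) (ZpV (svalP a)).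
Lemma zs_eq (a b : zs) : sval a = sval b -> a = b.
Proof. by case: a b => [a pa] [b pb] /= e; subst; rewrite (Prop_irrelevance pa pb). Qed.
Lemma zsA : associative zsadd.
Proof. by move=> a b c; apply: zs_eq => /=; rewrite gmulA. Qed.
Lemma zsC : commutative zsadd.
Proof. by move=> a b; apply: zs_eq => /=; rewrite (ZpC (svalP a) (svalP b)). Qed.
Lemma zs0a : left_id zs0 zsadd.
Proof. by move=> a; apply: zs_eq => /=; rewrite gmul1. Qed.
Lemma zsNa : left_inverse zs0 zsopp zsadd.
Proof. by move=> a; apply: zs_eq => /=; rewrite gmulV. Qed.
HB.instance Definition _ := GRing.isZmodule.Build zs zsA zsC zs0a zsNa.
End ZS.

Definition Ieq (I : Type) := I.
HB.instance Definition _ (I : Type) := gen_eqMixin (Ieq I).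



Lemma uniq_NoDup (X : eqType) (l : seq X) : uniq l -> List.NoDup l.
Proof.
elim: l => [|a l IH] /=; first by constructor.
move/andP=> [al ul]; constructor; last exact: IH.
move=> H; move/negP: al; apply; elim: l H {IH ul} => [|b l IH] //= [->|H].
  by rewrite inE eqxx.
by rewrite inE IH ?orbT.
Qed.

Lemma mem_In (X : eqType) (l : seq X) x : x \in l -> List.In x l.
Proof.
elim: l => [|a l IH] //=; rewrite inE => /orP [/eqP ->|H]; [by left|by right; apply: IH].
Qed.

Section Proj.
Variables (T : grp) (A : absub T) (I : Type) (G : zmodType) (f : I -> G -> T)
  (Zc : T -> Prop).
Hypothesis hfZ : forall i g, Zp A (f i g).
Hypothesis hfD : forall i a b, f i (a + b)%R = gmul (f i a) (f i b).
Hypothesis hZc : forall z, Zc z -> Zp A z.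
Hypothesis sZc : subgroup Zc.
Hypothesis hind : forall (s : seq (I * G)) z, List.NoDup (map fst s) -> Zc z ->
  gmul (gprod (map (fun q => f q.1 q.2) s)) z = gone ->
  z = gone /\ forall q, List.In q s -> q.2 = 0%R.

Local Open Scope ring_scope.
Definition Fz (i : I) (g : G) : zs A := exist _ (f i g) (hfZ i g).
Definition emb (x : T) : zs A :=
  match pselect (Zp A x) with left p => exist _ x p | right _ => 0 end.
Lemma embE x : Zp A x -> sval (emb x) = x.
Proof. by rewrite /emb; case: pselect. Qed.
Lemma emb_sval (a : zs A) : emb (sval a) = a.
Proof. by apply: zs_eq; rewrite embE //; apply: svalP. Qed.
Lemma svalD (a b : zs A) : sval (a + b) = gmul (sval a) (sval b).
Proof. by []. Qed.
Lemma svalN (a : zs A) : sval (- a) = ginv (sval a).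
Proof. by []. Qed.
Lemma sval0 : sval (0 : zs A) = gone.
Proof. by []. Qed.
Lemma embM x y : Zp A x -> Zp A y -> emb (gmul x y) = emb x + emb y.
Proof. by move=> zx zy; apply: zs_eq; rewrite svalD !embE //; apply: ZpM. Qed.
Lemma embV x : Zp A x -> emb (ginv x) = - emb x.
Proof. by move=> zx; apply: zs_eq; rewrite svalN !embE //; apply: ZpV. Qed.
Lemma FzD i a b : Fz i (a + b) = Fz i a + Fz i b.
Proof. by apply: zs_eq; rewrite svalD /= hfD. Qed.
Lemma Fz0 i : Fz i 0 = 0.
Proof. by apply: (@addrI _ (Fz i 0)); rewrite -FzD !addr0. Qed.
Lemma FzN i a : Fz i (- a) = - Fz i a.
Proof. by apply: (@addrI _ (Fz i a)); rewrite -FzD !subrr Fz0. Qed.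

Definition S (s : seq (Ieq I * G)) : zs A := \sum_(q <- s) Fz q.1 q.2.
Lemma svalS s : sval (S s) = gprod (map (fun q => f q.1 q.2) s).
Proof.
rewrite /S; elim: s => [|q s IH]; first by rewrite big_nil.
by rewrite big_cons svalD IH.
Qed.
Definition c (s : seq (Ieq I * G)) (i : Ieq I) : G := \sum_(q <- s | q.1 == i) q.2.

Lemma collapse s : S s = \sum_(i <- undup (map fst s)) Fz i (c s i).
Proof.
have E i : Fz i (c s i) = \sum_(q <- s | q.1 == i) Fz q.1 q.2.
  rewrite /c (big_morph (Fz i) (FzD i) (Fz0 i)).
  by apply: eq_bigr => q /eqP ->.
under eq_bigr do rewrite E big_mkcond /=.
rewrite exchange_big /S; apply: eq_big_seq => q qs /=.
have qU : q.1 \in undup (map fst s) by rewrite mem_undup map_f.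
rewrite (bigD1_seq q.1) //= ?undup_uniq // eqxx big1 ?addr0 // => j jn.
by rewrite eq_sym (negbTE jn).
Qed.

Lemma ind2 s z : Zc z -> S s + emb z = 0 -> (forall i, c s i = 0) /\ z = gone.
Proof.
move=> cz e.
pose s' := [seq (i, c s i) | i <- undup (map fst s)].
have fs' : map fst s' = undup (map fst s) by rewrite -map_comp map_id.
have Ss' : S s' = S s by rewrite [RHS]collapse /S big_map.
idtac.
have nd : List.NoDup [seq i.1 | i <- (s' : seq (I * G))].
  by rewrite fs'; exact: (uniq_NoDup (X := Ieq I) (undup_uniq _)).
have eq1 : gmul (gprod (map (fun q => f q.1 q.2) (s' : seq (I * G)))) z = gone.
  by rewrite -svalS -(embE (hZc cz)) -svalD Ss' e.
have [z1 H] := hind nd cz eq1.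
split => // i.
have [iU|niU] := boolP (i \in undup (map fst s)).
  have := H (i, c s i); apply; apply: (mem_In (X := (Ieq I * G)%type)); exact: map_f.
rewrite /c big1_seq // => q /andP [/eqP qi qs]; case/negP: niU.
by rewrite mem_undup -qi map_f.
Qed.

Definition D x (p : seq (I * G) * T) :=
  [/\ List.NoDup (map fst p.1), Zc p.2 & x = gmul (gprod (map (fun q => f q.1 q.2) p.1)) p.2].
Definition dec x := epsilon (inhabits ([::], gone)) (D x).
Definition coef x (i : I) : G := c (dec x).1 i.
Lemma decP x : (exists p, D x p) -> D x (dec x).
Proof. exact: epsilon_spec. Qed.
Lemma DZ x p : D x p -> Zp A x.
Proof.
case=> _ cz ->; apply: ZpM; last exact: hZc.
rewrite -(svalS p.1); exact: svalP.
Qed.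
Lemma emb_D x p : D x p -> emb x = S p.1 + emb p.2.
Proof.
move=> [_ cz ->]; rewrite -svalS embM ?emb_sval //; [exact: svalP|exact: hZc].
Qed.

Lemma S_neg s : S [seq (q.1, - q.2) | q <- s] = - S s.
Proof. by rewrite /S big_map -sumrN; apply: eq_bigr => q _ /=; rewrite FzN. Qed.
Lemma c_neg s i : c [seq (q.1, - q.2) | q <- s] i = - c s i.
Proof. by rewrite /c big_map sumrN. Qed.

Lemma coefM x y : (exists p, D x p) -> (exists p, D y p) ->
  (exists p, D (gmul x y) p) -> forall i, coef (gmul x y) i = coef x i + coef y i.
Proof.
move=> /decP Dx /decP Dy /decP Dxy i.
set p1 := dec x in Dx *; set p2 := dec y in Dy *; set p3 := dec (gmul x y) in Dxy *.
have ex := emb_D Dx; have ey := emb_D Dy; have exy := emb_D Dxy.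
rewrite (embM (DZ Dx) (DZ Dy)) ex ey in exy.
case: Dx => _ c1 _; case: Dy => _ c2 _; case: Dxy => _ c3 _.
have [sZ1 sZM sZV] := sZc.
set s := (p3.1 : seq (Ieq I * G)) ++ [seq (q.1, - q.2) | q <- (p1.1 : seq (Ieq I * G)) ++ p2.1].
set z := gmul p3.2 (ginv (gmul p1.2 p2.2)).
have cz : Zc z by apply: (sZM) => //; apply: (sZV); apply: (sZM).
have := ind2 (s := s) cz.
rewrite /z embM ?embV; try by (apply: hZc; auto).
rewrite embM; try by (apply: hZc; auto).
rewrite /S big_cat /= -/(S _) -/(S _) S_neg /S big_cat /= -!/(S _).
case.
  by rewrite addrACA -opprD (addrACA (S p1.1)) exy subrr.

move=> Hc _; have := Hc i; rewrite /c big_cat /= big_map sumrN big_cat /= /coef -/p1 -/p2 -/p3.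
by move/eqP; rewrite subr_eq0 => /eqP.
Qed.

Lemma coef0 x : (exists p, D x p) -> (forall i, coef x i = 0) -> Zc x.
Proof.
move=> /decP Dx H; have := Dx; case=> _ cz E; rewrite E -svalS.
suff -> : S (dec x).1 = 0 by rewrite sval0 gmul1.
rewrite collapse big1 // => i _; rewrite -/(coef x i) H; exact: Fz0.
Qed.
End Proj.
Theorem lemma4p3 (L T : grp) (N : L -> Prop) (h : T -> L) (hs : L -> T)
    (F : L -> T -> T) (Hs : T -> Prop) (Hc Hm : T -> Prop)
    (G : zmodType) (FG : L -> G -> G) :
  (* (c, g) ∈ C^5_aut *)
  isC5 N h hs F Hs Hc FG ->
  (* Hom(N_c, G_g) = 0 *)
  (forall f : L -> G,
     hom_on (T2 := grp_of_zmod G) N (fun _ => True) f ->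
     forall n, N n -> f n = 0%R) ->
  (* m ∈ M_c *)
  inM N h hs F Hs Hc Hm FG ->
  (* m is |N_c|^+-free over (c, g) *)
  mu_free_N N h hs F Hs Hc Hm FG ->
  (* Hom(N_c, Z(H_m)) ⊆ Hom(N_c, H_c) *)
  forall phi : L -> T, hom_on N (center Hm) phi ->
    forall n, N n -> Hc (phi n).
Proof.
move=> [[C4c _] _ _ _ _] hNG [[[[C4m _] _ _ _ _] _] _ _ cHcm _] mfree phi hphi.
case: C4c => [[[sN _] sHc] _ _ _ _].
case: C4m => [[_ sHm] _ _ _ _].
have zHcm z : center Hc z -> center Hm z by move=> /cHcm [].
have comm a z : Hm a -> center Hm z -> gmul a z = gmul z a.
  by move=> ha [_ cz]; rewrite cz.
have [cHc1 cHcM cHcV] := center_sub sHc.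
have [cHm1 cHmM cHmV] := center_sub sHm.
have [phiZ phiM] := hphi.
have [N1 NM NV] := sN.
have phi1 := hom1 sN hphi.
pose G2 x := exists n, N n /\ exists z, center Hc z /\ x = gmul (phi n) z.
have sG2 : subgroup G2.
  split.
  - by exists gone; split => //; exists gone; split => //; rewrite phi1 gmul1.
  - move=> x y [n1 [Nn1 [z1 [cz1 ->]]]] [n2 [Nn2 [z2 [cz2 ->]]]].
    exists (gmul n1 n2); split; first exact: NM.
    exists (gmul z1 z2); split; first exact: cHcM.
    rewrite phiM // -!gmulA; congr gmul; rewrite !gmulA; congr gmul; symmetry.
    by rewrite comm //; [case: (phiZ _ Nn2)|exact: zHcm].
  - move=> x [n [Nn [z [cz ->]]]]; exists (ginv n); split; first exact: NV.
    exists (ginv z); split; first exact: cHcV.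
    rewrite ginvM (homV sN hphi Nn); symmetry; apply: comm; first by case: (cHmV _ (phiZ _ Nn)).
    exact: (cHmV _ (zHcm _ cz)).

have [Hm' [inM' _ free' inc']] : exists Hm' : T -> Prop,
      [/\ inM N h hs F Hs Hc Hm' FG, (forall x, Hm' x -> Hm x),
          free_over F Hc Hm' FG & (forall x, G2 x -> center Hm' x)].
  apply: mfree => //.
  - move=> x cx; exists gone; split => //; exists x; split => //.
    by rewrite phi1 gmul1.
  - move=> x [n [Nn [z [cz ->]]]]; apply: cHmM; [exact: phiZ|exact: zHcm].
  pose P x n := N n /\ exists z, center Hc z /\ x = gmul (phi n) z.
  exists (fun x => epsilon (inhabits gone) (P x)); split.
    by move=> x Gx; have [] := epsilon_spec (inhabits gone) (P x) Gx.
  move=> x y Gx Gy.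
  have [_ [z1 [cz1 ex]]] := epsilon_spec (inhabits gone) (P x) Gx.
  have [Nn [z2 [cz2 ey]]] := epsilon_spec (inhabits gone) (P y) Gy.
  move=> e; rewrite ex ey e.
  move: (epsilon _ _) Nn => m Nm.
  have hp : Hm (ginv (phi m)) by case: (cHmV _ (phiZ _ Nm)).
  have zz : center Hm (gmul z1 (ginv z2)).
    by apply: cHmM; [exact: zHcm|exact: cHmV (zHcm _ cz2)].
  rewrite ginvM -gmulA (gmulA z1) -(comm _ _ hp zz) gmulA gmulVr gmul1.
  exact: cHcM cz1 (cHcV _ cz2).
case: inM' => [[[[C4m' _] _ _ _ _] _] _ _ cHcm' _].
case: C4m' => [[_ sHm'] _ _ _ _].
have [cHm'1 cHm'M cHm'V] := center_sub sHm'.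
have cHm'C x y : center Hm' x -> center Hm' y -> gmul x y = gmul y x.
  by move=> [_ cx] [hy _]; rewrite cx.
pose AZ := AbSub cHm'1 cHm'M cHm'V cHm'C.
case: free' => I [f [fhom _ _ fdec find]].
have hfZ : forall i g, Zp AZ (f i g) by move=> i g; case: (fhom i) => + _; apply.
have hfD : forall i (a b : G), f i (a + b)%R = gmul (f i a) (f i b).
  by move=> i a b; case: (fhom i) => _; apply.
have hZc : forall z, center Hc z -> Zp AZ z by move=> z /cHcm' [].
have sZc := center_sub sHc.
have Dphi : forall n, N n -> exists p, D f (center Hc) (phi n) p.
  move=> n Nn; have : G2 (phi n).
    by exists n; split => //; exists gone; split => //; rewrite gmulr1.
  move/inc'/fdec => [s [z [nd cz e]]]; by exists (s, z).
move=> n Nn; suff : center Hc (phi n) by case.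
apply: (coef0 hfZ hfD (Dphi n Nn)) => i.
pose g (m : L) := coef f (center Hc) (phi m) i.
have : hom_on (T2 := grp_of_zmod G) N (fun _ => True) g.
  split => // a b Na Nb; rewrite /g phiM //.
  apply: (coefM hfZ hfD hZc sZc find (Dphi a Na) (Dphi b Nb)).
  by rewrite -phiM //; apply: Dphi; apply: NM.
by move/hNG => /(_ n Nn).
Qed.
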